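(* Let $I=((x_1x_2)^{\omega_1},x_2x_3,x_3x_4)\subseteq S=\mathbb{K}[x_1,x_2,x_3,x_4]$ with $\omega_1\ge2$ (the edge ideal of the weighted path $x_1-x_2-x_3-x_4$ with weights $\omega_1,1,1$). Then $\operatorname{depth}(S/I^t)\ge1$ for every $t\ge2$.
   Context: $\mathbb{K}$ is a field; $\operatorname{depth}$ is the depth of a graded $S$-module. *)

(* Defs.v *)
From mathcomp Require Import all_boot all_algebra.
From mathcomp Require Import mpoly.
Set Implicit Arguments. Unset Strict Implicit. Unset Printing Implicit Defensive.
Import GRing.Theory.
Local Open Scope ring_scope.

Definition in_ideal (R : comRingType) (s : seq R) (p : R) : Prop :=
  exists cs : seq R, p = \sum_(i < size s) cs`_i * s`_i.

Fixpoint pow_gens (R : comRingType) (s : seq R) (t : nat) : seq R :=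
  match t with
  | 0 => [:: 1]
  | t'.+1 => [seq a * b | a <- s, b <- pow_gens s t']
  end.

Definition max_gens (K : fieldType) (n : nat) : seq {mpoly K[n]} :=
  [seq 'X_i | i <- enum 'I_n].

(* depth (S/J) >= 1, with S = K[x_1..x_n], J generated by gens:
   there is a regular sequence of length 1 on S/J in m, i.e. an f in m
   which is a nonzerodivisor on S/J and with S/J <> f (S/J). *)
Definition depth_quot_ge1 (K : fieldType) (n : nat) (gens : seq {mpoly K[n]})
  : Prop :=
  exists f : {mpoly K[n]},
    [/\ in_ideal (max_gens K n) f,
        (forall g : {mpoly K[n]}, in_ideal gens (f * g) -> in_ideal gens g)
      & ~ in_ideal (f :: gens) 1].

(* Main.v *)
Require Import Defs.
From mathcomp Require Import all_boot all_algebra.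
From mathcomp Require Import mpoly.
From mathcomp Require Import zify ring.
From Stdlib Require Import Classical ClassicalEpsilon.
Set Implicit Arguments. Unset Strict Implicit. Unset Printing Implicit Defensive.
Import GRing.Theory.
Local Open Scope ring_scope.


Section Ideal.
Variable R : comRingType.
Variable s : seq R.

Lemma in_ideal0 : in_ideal s 0.
Proof. by exists [::]; rewrite big1 // => i _; rewrite nth_nil mul0r. Qed.

Lemma in_idealD p q : in_ideal s p -> in_ideal s q -> in_ideal s (p + q).
Proof.
move=> [a ->] [b ->]; exists (mkseq (fun i => a`_i + b`_i) (size s)).
rewrite -big_split /=; apply: eq_bigr => i _.
by rewrite nth_mkseq // mulrDl.
Qed.

Lemma in_idealM c p : in_ideal s p -> in_ideal s (c * p).
Proof.
move=> [a ->]; exists (mkseq (fun i => c * a`_i) (size s)).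
rewrite mulr_sumr; apply: eq_bigr => i _.
by rewrite nth_mkseq // mulrA.
Qed.

Lemma in_idealN p : in_ideal s p -> in_ideal s (- p).
Proof. by move=> h; rewrite -mulN1r; apply: in_idealM. Qed.

Lemma in_idealB p q : in_ideal s p -> in_ideal s q -> in_ideal s (p - q).
Proof. by move=> hp hq; apply: in_idealD => //; apply: in_idealN. Qed.

Lemma in_ideal_mem x : x \in s -> in_ideal s x.
Proof.
move=> xs; exists (mkseq (fun i => (i == index x s)%:R) (size s)).
have hi : (index x s < size s)%N by rewrite index_mem.
rewrite (bigD1 (Ordinal hi)) //= nth_mkseq // eqxx mul1r nth_index //.
rewrite big1 ?addr0 // => i /= hne.
rewrite nth_mkseq //.
have -> : (i == index x s :> nat) = false.
  by apply/negbTE; apply: contra hne => /eqP h; apply/eqP/val_inj.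
by rewrite mul0r.
Qed.

Lemma in_ideal_sum (I : Type) (r : seq I) (F : I -> R) :
  (forall i, in_ideal s (F i)) -> in_ideal s (\sum_(i <- r) F i).
Proof.
move=> h; apply: (big_ind (in_ideal s)) => //.
- exact: in_ideal0.
- exact: in_idealD.
Qed.

End Ideal.


Lemma mcoeffMXg (R : comRingType) n (p : {mpoly R[n]}) e k :
  (p * 'X_[e])@_k = if (e <= k)%MM then p@_(k - e) else 0.
Proof.
case: ifP => H.
  by rewrite -{1}(submK H) addmC mcoeffMX.
apply: memN_msupp_eq0; rewrite (perm_mem (msuppMX _ _)).
apply/negP => /mapP [m' _ hk]; move: H; rewrite hk.
by rewrite lem_addr.
Qed.

Lemma ideal_supp (R : comRingType) n (s : seq {mpoly R[n]})
  (P : 'X_{1..n} -> Prop) :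
  (forall x, x \in s -> exists e, P e /\ x = 'X_[e]) ->
  forall p, in_ideal s p -> forall k, p@_k != 0 -> exists e, P e /\ (e <= k)%MM.
Proof.
move=> hs p [cs ->] k hk; apply: NNPP => H; move/eqP: hk; apply.
rewrite raddf_sum big1 // => i _.
have [e [Pe ->]] := hs _ (mem_nth 0 (ltn_ord i)).
rewrite /= mcoeffMXg; case: ifP => // he.
by exfalso; apply: H; exists e.
Qed.


Lemma inord_eq (a b : nat) : (a < 4)%N -> (b < 4)%N ->
  (inord a == inord b :> 'I_4) = (a == b).
Proof. by move=> ha hb; rewrite -val_eqE /= !inordK. Qed.

Lemma ord4_cases (l : 'I_4) :
  l = inord 0 \/ l = inord 1 \/ l = inord 2 \/ l = inord 3.
Proof.
case: l => [[|[|[|[|l]]]] Hl];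
  try (by left; apply: val_inj; rewrite /= inordK);
  try (by right; left; apply: val_inj; rewrite /= inordK);
  try (by right; right; left; apply: val_inj; rewrite /= inordK);
  try (by right; right; right; apply: val_inj; rewrite /= inordK).
Qed.

Section Main.
Variable K : fieldType.
Variable w : nat.

Notation U l := (U_(inord l : 'I_4))%MM.
Definition ga : {mpoly K[4]} := ('X_(inord 0) * 'X_(inord 1)) ^+ w.
Definition gb : {mpoly K[4]} := 'X_(inord 1) * 'X_(inord 2).
Definition gc : {mpoly K[4]} := 'X_(inord 2) * 'X_(inord 3).

Definition E (i j k : nat) : 'X_{1..4} :=
  ((U 0 + U 1) *+ w *+ i + (U 1 + U 2) *+ j + (U 2 + U 3) *+ k)%MM.

Lemma E_eval i j k :
  [/\ E i j k (inord 0) = (w * i)%N, E i j k (inord 1) = (w * i + j)%N,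
      E i j k (inord 2) = (j + k)%N & E i j k (inord 3) = k].
Proof.
rewrite /E !mnmDE !mulmnE !mnmDE !mnm1E !inord_eq //=.
split; lia.
Qed.

Lemma abc_X i j k : ga ^+ i * gb ^+ j * gc ^+ k = 'X_[E i j k].
Proof.
by rewrite /ga /gb /gc /E -!mpolyXD !mpolyXn -!mpolyXD.
Qed.

Lemma pow_gens_char t x : x \in pow_gens [:: ga; gb; gc] t ->
  exists i j k, (i + j + k = t)%N /\ x = ga ^+ i * gb ^+ j * gc ^+ k.
Proof.
elim: t x => [|t IH] x.
  by rewrite /= mem_seq1 => /eqP ->; exists 0%N, 0%N, 0%N; rewrite !expr0 !mul1r.
move/allpairsP => [[y z]] /= [hy /IH [i [j [k [hs ->]]]] ->].
move: hy; rewrite !inE => /orP [/eqP ->|/orP [/eqP ->|/eqP ->]].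
- exists i.+1, j, k; split; first lia. rewrite !exprS; ring.
- exists i, j.+1, k; split; first lia. rewrite !exprS; ring.
- exists i, j, k.+1; split; first lia. rewrite !exprS; ring.
Qed.

Lemma pow_gens_mem t i j k : (i + j + k = t)%N ->
  ga ^+ i * gb ^+ j * gc ^+ k \in pow_gens [:: ga; gb; gc] t.
Proof.
elim: t i j k => [|t IH] i j k hs.
  have [-> [-> ->]] : [/\ i = 0%N, j = 0%N & k = 0%N] by split; lia.
  by rewrite !expr0 !mul1r /= mem_seq1.
case: i hs => [|i] hs.
  case: j hs => [|j] hs.
    case: k hs => [|k] hs; first by [].
    have -> : ga ^+ 0 * gb ^+ 0 * gc ^+ k.+1 = gc * (ga ^+ 0 * gb ^+ 0 * gc ^+ k).
      by rewrite !exprS; ring.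
    apply: allpairs_f; first by rewrite !inE eqxx !orbT.
    by apply: IH; lia.
  have -> : ga ^+ 0 * gb ^+ j.+1 * gc ^+ k = gb * (ga ^+ 0 * gb ^+ j * gc ^+ k).
    by rewrite !exprS; ring.
  apply: allpairs_f; first by rewrite !inE eqxx !orbT.
  by apply: IH; lia.
have -> : ga ^+ i.+1 * gb ^+ j * gc ^+ k = ga * (ga ^+ i * gb ^+ j * gc ^+ k).
  by rewrite !exprS; ring.
apply: allpairs_f; first by rewrite !inE eqxx.
by apply: IH; lia.
Qed.


Lemma exists_max (T : eqType) (r : seq T) (P : pred T) (F : T -> nat) x :
  x \in r -> P x ->
  exists y, [/\ y \in r, P y & forall z, z \in r -> P z -> (F z <= F y)%N].
Proof.
elim: r x => // a r IH x.
case hr: (has P r).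
  move=> _ _; have [x' x'r Px'] := hasP hr.
  have [y [yr Py hy]] := IH x' x'r Px'.
  case: (boolP (P a && (F y < F a))%N) => [/andP [Pa lt]|hn].
    exists a; split => //; first by rewrite inE eqxx.
    move=> z; rewrite inE => /orP [/eqP -> //|zr Pz].
    by apply: leq_trans (hy z zr Pz) (ltnW lt).
  exists y; split => //; first by rewrite inE yr orbT.
  move=> z; rewrite inE => /orP [/eqP ->|zr Pz]; last exact: hy.
  move=> Pa; move: hn; rewrite Pa /= -leqNgt; done.
move=> hx Px; exists a; move: hx; rewrite inE => /orP [/eqP hx|xr].
  split => //; first by rewrite inE eqxx.
  - by rewrite -hx.
  move=> z; rewrite inE => /orP [/eqP -> //|zr Pz].
  by move/hasPn: hr => /(_ z zr); rewrite Pz.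
by move/hasPn: hr => /(_ x xr); rewrite Px.
Qed.

Variable t : nat.
Hypothesis hw : (1 <= w)%N.
Notation J := (pow_gens [:: ga; gb; gc] t).

Definition inJ (m : 'X_{1..4}) : Prop := exists i j k, (i + j + k = t)%N /\ (w * i <= m (inord 0))%N /\ (w * i + j <= m (inord 1))%N /\ (j + k <= m (inord 2))%N /\ (k <= m (inord 3))%N.

Lemma ideal_inJ p k : in_ideal J p -> p@_k != 0 -> inJ k.
Proof.
move=> hp hk.
have := @ideal_supp K 4 J (fun e : 'X_{1..4} => exists i j k : nat, (i + j + k = t)%N /\ e = E i j k) _ p hp k hk.
case.
  move=> x /pow_gens_char [i [j [l [h ->]]]]; exists (E i j l); split.
    by exists i, j, l.
  exact: abc_X.
move=> e [[i [j [l [hs ->]]]] /mnm_lepP he].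
have [h0 h1 h2 h3] := E_eval i j l.
exists i, j, l; split => //.
move: (he (inord 0)) (he (inord 1)) (he (inord 2)) (he (inord 3)); rewrite h0 h1 h2 h3; lia.
Qed.

Lemma inJ_ideal m : inJ m -> in_ideal J 'X_[m].
Proof.
move=> [i [j [k [hs [h0 [h1 [h2 h3]]]]]]].
have hle : (E i j k <= m)%MM.
  apply/mnm_lepP => l; have [e0 e1 e2 e3] := E_eval i j k.
  by case: (ord4_cases l) => [->|[->|[->|->]]]; rewrite ?e0 ?e1 ?e2 ?e3.
rewrite -(submK hle) mpolyXD -abc_X.
by apply: in_idealM; apply: in_ideal_mem; apply: pow_gens_mem.
Qed.

Lemma supp_ideal p : (forall k, p@_k != 0 -> inJ k) -> in_ideal J p.
Proof.
move=> h; rewrite (mpolyE p) big_seq; apply: (big_ind (in_ideal J)).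
- exact: in_ideal0.
- exact: in_idealD.
move=> m hm; rewrite -mul_mpolyC; apply: in_idealM; apply: inJ_ideal.
by apply: h; rewrite -mcoeff_msupp.
Qed.

End Main.

Section Main2.
Variable K : fieldType.
Variable w t : nat.
Hypothesis hw : (1 <= w)%N.

Lemma inJ_meet (m m' m'' : 'X_{1..4}) : inJ w t m -> inJ w t m' ->
  (m (inord 1) <= m'' (inord 1))%N -> (m' (inord 1) <= m'' (inord 1))%N ->
  (m (inord 2) <= m'' (inord 2))%N -> (m' (inord 2) <= m'' (inord 2))%N ->
  (minn (m (inord 0)) (m' (inord 0)) <= m'' (inord 0))%N ->
  (minn (m (inord 3)) (m' (inord 3)) <= m'' (inord 3))%N -> inJ w t m''.
Proof.
move=> [i [j [k [hs [h0 [h1 [h2 h3]]]]]]] [i' [j' [k' [hs' [h0' [h1' [h2' h3']]]]]]].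
move=> a1 a1' a2 a2' a0 a3.
have [hii|hii] := leqP i i'; have [hkk|hkk] := leqP k k'.
- have := leq_mul (leqnn w) hii.
  exists i, j, k; split => //; lia.
- have := leq_mul (leqnn w) hii.
  have : (i' - i <= w * (i' - i))%N by rewrite leq_pmull.
  rewrite mulnBr => hb ha.
  exists i, (j' + (i' - i))%N, k'; split; first lia.
  split; first lia. split; first lia. split; lia.
- have := leq_mul (leqnn w) (ltnW hii).
  have : (i - i' <= w * (i - i'))%N by rewrite leq_pmull.
  rewrite mulnBr => hb ha.
  exists i', (j + (i - i'))%N, k; split; first lia.
  split; first lia. split; first lia. split; lia.
- have := leq_mul (leqnn w) (ltnW hii).
  exists i', j', k'; split => //; lia.
Qed.

End Main2.


Section Main3.
Variable K : fieldType.
Variable w t : nat.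
Hypothesis hw : (1 <= w)%N.
Notation J := (pow_gens [:: ga K w; gb K; gc K] t).
Notation U l := (U_(inord l : 'I_4))%MM.

Definition inJb m : bool := if excluded_middle_informative (inJ w t m) then true else false.
Lemma inJbP m : reflect (inJ w t m) (inJb m).
Proof. by rewrite /inJb; case: excluded_middle_informative => h; constructor. Qed.

Lemma coef_filter (g : {mpoly K[4]}) (F : 'X_{1..4} -> K -> K) k :
  (forall m, F m 0 = 0) ->
  (\sum_(m <- msupp g) F m g@_m *: 'X_[m])@_k = F k g@_k.
Proof.
move=> F0; rewrite raddf_sum /=.
case: (boolP (k \in msupp g)) => hk.
  rewrite (bigD1_seq k) //= ?msupp_uniq // mcoeffZ mcoeffX eqxx mulr1.
  rewrite big1 ?addr0 // => m hm.
  by rewrite mcoeffZ mcoeffX (negbTE hm) mulr0.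
rewrite big1_seq; last first.
  move=> m /andP [_ hm]; rewrite mcoeffZ mcoeffX.
  have -> : (m == k) = false by apply/negbTE; apply: contraNneq hk => <-.
  by rewrite mulr0.
by rewrite memN_msupp_eq0 // F0.
Qed.

Lemma nzd (g : {mpoly K[4]}) :
  in_ideal J (('X_(inord 0) + 'X_(inord 3)) * g) -> in_ideal J g.
Proof.
move=> hfg.
set h := \sum_(m <- msupp g) (if inJb m then 0 else g@_m) *: 'X_[m].
set gJ := \sum_(m <- msupp g) (if inJb m then g@_m else 0) *: 'X_[m].
have hcoef k : h@_k = if inJb k then 0 else g@_k.
  by rewrite /h (@coef_filter g (fun m c => if inJb m then 0 else c)) // => m; case: ifP.
have hg : g = h + gJ.
  rewrite {1}(mpolyE g) /h /gJ -big_split /=; apply: eq_bigr => m _.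
  by case: ifP => _; rewrite scale0r ?add0r ?addr0.
have hgJ : in_ideal J gJ.
  rewrite /gJ; apply: (big_ind (in_ideal J)); [exact: in_ideal0|exact: in_idealD|].
  move=> m _; case: (inJbP m) => hm.
    by rewrite -mul_mpolyC; apply: in_idealM; apply: inJ_ideal.
  by rewrite scale0r; apply: in_ideal0.
suff h0 : h = 0 by rewrite hg h0 add0r.
apply: NNPP => hnz.
have [m0 hm0] : exists m0, m0 \in msupp h.
  case E: (msupp h) => [|m0 r]; last by exists m0; rewrite inE eqxx.
  by exfalso; apply: hnz; apply: msuppnil0.
set P := fun m : 'X_{1..4} => (m (inord 1) == m0 (inord 1)) && (m (inord 2) == m0 (inord 2)).
have P0 : P m0 by rewrite /P !eqxx.
have [m1 [m1h Pm1 hm1]] := exists_max (fun m : 'X_{1..4} => m (inord 0)) hm0 P0.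
have [m2 [m2h Pm2 hm2]] := exists_max (fun m : 'X_{1..4} => m (inord 3)) hm0 P0.
have hfh : in_ideal J (('X_(inord 0) + 'X_(inord 3)) * h).
  have -> : ('X_(inord 0) + 'X_(inord 3)) * h =
     ('X_(inord 0) + 'X_(inord 3)) * g - ('X_(inord 0) + 'X_(inord 3)) * gJ.
    by rewrite {1}hg; ring.
  by apply: in_idealB => //; apply: in_idealM.
have fhE : ('X_(inord 0) + 'X_(inord 3)) * h = h * 'X_[U 0] + h * 'X_[U 3].
  by ring.
have hm1nz : h@_m1 != 0 by rewrite -mcoeff_msupp.
have hm2nz : h@_m2 != 0 by rewrite -mcoeff_msupp.
have nJ1 : ~ inJ w t m1.
  move=> hJ; have hb : inJb m1 := introT (inJbP m1) hJ.
  by move: hm1nz; rewrite hcoef hb eqxx.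
have ev m a c b : (a < 4)%N -> (c < 4)%N -> (b < 4)%N ->
    (m + U a - U c)%MM (inord b) = ((m (inord b) + (a == b)) - (c == b))%N.
  by move=> ha hc hb; rewrite mnmBE mnmDE !mnm1E !inord_eq.
have ev1 m a b : (a < 4)%N -> (b < 4)%N ->
    (m + U a)%MM (inord b) = (m (inord b) + (a == b))%N.
  by move=> ha hb; rewrite mnmDE !mnm1E !inord_eq.
move/andP: (Pm1) => [/eqP p11 /eqP p12].
move/andP: (Pm2) => [/eqP p21 /eqP p22].
have J1 : inJ w t (m1 + U 0).
  apply: (ideal_inJ hw hfh).
  rewrite fhE mcoeffD !mcoeffMXg lem_addl addmK.
  case: ifP => _; last by rewrite addr0.
  have -> : h@_(m1 + U 0 - U 3)%MM = 0.
    apply: memN_msupp_eq0; apply/negP => hin.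
    have : P (m1 + U 0 - U 3)%MM by rewrite /P !ev // /= !addn0 !subn0 p11 p12 !eqxx.
    move=> /(hm1 _ hin); rewrite ev //=; lia.
  by rewrite addr0.
have J2 : inJ w t (m2 + U 3).
  apply: (ideal_inJ hw hfh).
  rewrite fhE mcoeffD !mcoeffMXg lem_addl addmK.
  case: ifP => _; last by rewrite add0r.
  have -> : h@_(m2 + U 3 - U 0)%MM = 0.
    apply: memN_msupp_eq0; apply/negP => hin.
    have : P (m2 + U 3 - U 0)%MM by rewrite /P !ev // /= !addn0 !subn0 p21 p22 !eqxx.
    move=> /(hm2 _ hin); rewrite ev //=; lia.
  by rewrite add0r.
have le21 := hm1 _ m2h Pm2.
apply: nJ1; apply: (inJ_meet hw J1 J2); rewrite ?ev1 //=; lia.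
Qed.
End Main3.


Lemma mg_nth (K : fieldType) k : (k < 4)%N -> (max_gens K 4)`_k = 'X_(inord k).
Proof.
move=> hk; rewrite /max_gens (nth_map ord0); last by rewrite size_enum_ord.
congr ('X_ _); apply: val_inj; by rewrite /= nth_enum_ord // inordK.
Qed.

Lemma f_in_m (K : fieldType) :
  in_ideal (max_gens K 4) ('X_(inord 0) + 'X_(inord 3)).
Proof.
exists [:: 1; 0; 0; 1].
rewrite -(big_mkord xpredT (fun i => [:: 1; 0; 0; 1]`_i * (max_gens K 4)`_i)).
rewrite /max_gens size_map size_enum_ord -/(max_gens K 4).
rewrite !big_nat_recl //= big_geq // !mg_nth //.
by rewrite !mul1r !mul0r !add0r addr0.
Qed.

Theorem proposition4p13 (K : fieldType) (w1 : nat) (t : nat) :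
  (2 <= w1)%N -> (2 <= t)%N ->
  depth_quot_ge1
    (pow_gens
       [:: ('X_(inord 0) * 'X_(inord 1)) ^+ w1;
           'X_(inord 1) * 'X_(inord 2);
           'X_(inord 2) * 'X_(inord 3) : {mpoly K[4]}] t).
Proof.
move=> hw2 ht.
have hw : (1 <= w1)%N by lia.
exists ('X_(inord 0) + 'X_(inord 3)); split.
- exact: f_in_m.
- move=> g hfg; exact: (nzd hw hfg).
move=> [cs h1].
have := congr1 (mcoeff 0%MM) h1.
rewrite big_ord_recl mcoeff1 eqxx /= mcoeffD.
have -> : (cs`_0 * ('X_(inord 0) + 'X_(inord 3)))@_0 = 0 :> K.
  rewrite mulrDr mcoeffD !mcoeffMXg !lep1mP !mnm0E eqxx /=.
  by rewrite addr0.
set q := \sum_(i < _) _.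
have hq : in_ideal (pow_gens [:: ga K w1; gb K; gc K] t) q.
  exists (behead cs); rewrite /q; apply: eq_bigr => i _.
  by rewrite nth_behead.
case: (eqVneq (q@_0) 0) => [->|hnz].
  by rewrite add0r => /eqP; rewrite oner_eq0.
have := ideal_inJ hw hq hnz.
move=> [i [j [k [hs [h0 [h1' [h2 h3]]]]]]].
rewrite !mnm0E in h0 h1' h2 h3; nia.
Qed.
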